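(* For $\mu\ge\lambda>0$ let \[\kappa(\lambda,\mu)=\frac\mu\lambda-\Big(\sqrt2\Big(\frac\mu\lambda-\frac12\Big)^{1/2}-\lambda^{1/2}\Big)^2-(1-\mu^{1/2})^2.\] For every $0<\lambda\le\mu$ such that $\kappa(\lambda,\mu)>0$, there exist a path $\gamma(t)=(\gamma_X(t),\gamma_Y(t))$, $t\in[0,1]$, and $\kappa_0>0$ such that (i) $\gamma(0)=(1/2,1/2)$ and $\gamma(1)=(\lambda,\mu)$; (ii) $\kappa(\gamma(t))\ge\kappa_0>0$ for all $t\in[0,1]$; (iii) $\gamma$ is piecewise linear and $|\gamma_X'(t)|\le20$ and $|\gamma_Y'(t)|\le20$ for all $t\in[0,1]$ at which $\gamma$ is differentiable; (iv) $\gamma_X(t)\in[3/2-\sqrt2,10]$ and $\gamma_Y(t)\in[3/2-\sqrt2,10]$ for all $t\in[0,1]$. *)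

(* Defs.v *)
From Stdlib Require Import Reals.
Open Scope R_scope.

Definition kappa (l m : R) : R :=
  m / l - (sqrt 2 * sqrt (m / l - 1 / 2) - sqrt l) ^ 2 - (1 - sqrt m) ^ 2.

Definition partition01 (p : nat -> R) (n : nat) : Prop :=
  p 0%nat = 0 /\ p n = 1 /\ (forall i : nat, (i < n)%nat -> p i < p (S i)).

Definition pl_path_slope_bound (gX gY : R -> R) (p : nat -> R) (n : nat) (B : R)
  : Prop :=
  partition01 p n /\
  forall i : nat, (i < n)%nat ->
    exists aX bX aY bY : R,
      Rabs aX <= B /\ Rabs aY <= B /\
      forall t : R, p i <= t <= p (S i) ->
        gX t = aX * t + bX /\ gY t = aY * t + bY.

(* Main.v *)
Require Import Defs.
From Stdlib Require Import Reals Lra Lia Psatz.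
Open Scope R_scope.

Definition K (x y : R) : R := - (y / x) + 2 * sqrt (2 * y - x) - x + 2 * sqrt y - y.

Lemma kappa_K l m : 0 < l -> l <= 2 * m -> kappa l m = K l m.
Proof.
  intros hl hm. unfold kappa, K.
  assert (E : sqrt 2 * sqrt (m / l - 1 / 2) = sqrt (2 * m - l) / sqrt l).
  { assert (P : 0 <= m / l - 1/2).
    { apply Rmult_le_reg_r with (2*l); [lra|].
      replace ((m / l - 1/2) * (2*l)) with (2*m - l) by (field; lra); lra. }
    rewrite <- sqrt_mult by lra.
    replace (2 * (m / l - 1 / 2)) with ((2 * m - l) / l) by (field; lra).
    apply sqrt_div_alt; lra. }
  rewrite E.
  assert (Ha := sqrt_sqrt (2*m - l) ltac:(lra)).
  assert (Hs := sqrt_sqrt l ltac:(lra)).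
  assert (Hb := sqrt_sqrt m ltac:(lra)).
  assert (Hsp := sqrt_lt_R0 l hl).
  set (a := sqrt (2*m-l)) in *. set (s := sqrt l) in *. set (b := sqrt m) in *.
  replace ((a / s - s) ^ 2) with (a * a / (s * s) - 2 * a + s * s) by (field; lra).
  replace ((1 - b) ^ 2) with (1 - 2 * b + b * b) by ring.
  rewrite Ha, Hs, Hb. field. lra.
Qed.

Lemma sqrt_concave u v t : 0 <= u -> 0 <= v -> 0 <= t <= 1 ->
  (1 - t) * sqrt u + t * sqrt v <= sqrt ((1 - t) * u + t * v).
Proof.
  intros hu hv ht.
  assert (Hu := sqrt_sqrt u hu). assert (Hv := sqrt_sqrt v hv).
  assert (Pu := sqrt_pos u). assert (Pv := sqrt_pos v).
  rewrite <- (sqrt_square ((1 - t) * sqrt u + t * sqrt v)) by nra.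
  apply sqrt_le_1_alt.
  set (a := sqrt u) in *. set (b := sqrt v) in *.
  rewrite <- Hu, <- Hv.
  assert (0 <= t * (1 - t) * (a - b) ^ 2).
  { apply Rmult_le_pos; [nra| apply pow2_ge_0]. }
  replace ((1 - t) * (a * a) + t * (b * b)) with
    (((1 - t) * a + t * b) * ((1 - t) * a + t * b) + t * (1 - t) * (a - b) ^ 2) by ring.
  lra.
Qed.

Lemma K_seg x0 y0 x1 y1 t : 0 < x0 -> 0 < x1 -> x0 <= 2 * y0 -> x1 <= 2 * y1 ->
  (x0 = x1 \/ y0 * x1 = y1 * x0) -> 0 <= t <= 1 ->
  (1 - t) * K x0 y0 + t * K x1 y1 <= K ((1-t)*x0 + t*x1) ((1-t)*y0 + t*y1).
Proof.
  intros h0 h1 hy0 hy1 hr ht. unfold K.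
  assert (hx : 0 < (1-t)*x0 + t*x1) by nra.
  assert (Ediv : ((1-t)*y0 + t*y1) / ((1-t)*x0 + t*x1) = (1-t)*(y0/x0) + t*(y1/x1)).
  { destruct hr as [e|e].
    - subst x1. replace ((1-t)*x0 + t*x0) with x0 by ring. field. lra.
    - set (c := y0 / x0).
      assert (e0 : y0 = c * x0) by (unfold c; field; lra).
      assert (e1 : y1 = c * x1).
      { unfold c. apply Rmult_eq_reg_r with x0; [|lra]. field_simplify; [nra|lra]. }
      assert (y1 / x1 = c) by (rewrite e1; field; lra).
      rewrite H. rewrite e0, e1. field. lra. }
  rewrite Ediv.
  replace (2 * ((1 - t) * y0 + t * y1) - ((1 - t) * x0 + t * x1)) with
    ((1-t) * (2*y0 - x0) + t * (2*y1 - x1)) by ring.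
  assert (S1 := sqrt_concave (2*y0-x0) (2*y1-x1) t ltac:(lra) ltac:(lra) ht).
  assert (S2 := sqrt_concave y0 y1 t ltac:(lra) ltac:(lra) ht).
  nra.
Qed.

Lemma K_ray s r : 0 < s -> 1/2 <= r ->
  K (s * s) (r * (s * s)) = - r + 2 * s * (sqrt (2 * r - 1) + sqrt r) - (1 + r) * (s * s).
Proof.
  intros hs hr. unfold K.
  replace (2 * (r * (s * s)) - s * s) with ((2*r - 1) * (s * s)) by ring.
  rewrite (sqrt_mult (2*r-1) (s*s)) by nra. rewrite (sqrt_mult r (s*s)) by nra. rewrite sqrt_square by lra.
  field. nra.
Qed.

Lemma K_bounds x y : 0 < x -> x <= y -> 0 < K x y -> 3/2 - sqrt 2 <= x /\ y < 7.
Proof.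
  intros hx hxy hK. unfold K in hK.
  assert (Ha := sqrt_sqrt (2*y - x) ltac:(lra)).
  assert (Hb := sqrt_sqrt y ltac:(lra)).
  assert (Hs := sqrt_sqrt x ltac:(lra)).
  assert (Pa := sqrt_pos (2*y-x)). assert (Pb := sqrt_pos y).
  assert (Ps := sqrt_lt_R0 x hx).
  set (a := sqrt (2*y-x)) in *. set (b := sqrt y) in *. set (s := sqrt x) in *.
  assert (hK' : 0 < - y + 2 * a * x - x * x + 2 * b * x - y * x).
  { assert (0 < x * (- (y / x) + 2 * a - x + 2 * b - y)) by (apply Rmult_lt_0_compat; lra).
    replace (x * (- (y / x) + 2 * a - x + 2 * b - y)) with (- y + 2 * a * x - x * x + 2 * b * x - y * x) in H by (field; lra).
    exact H. }
  split.
  - destruct (Rle_or_lt (3/2 - sqrt 2) x) as [h|h]; [exact h|exfalso].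
    assert (Hq := sqrt_sqrt 2 ltac:(lra)). assert (Pq := sqrt_pos 2).
    set (q := sqrt 2) in *.
    assert (q14 : 1.4 < q) by nra.
    assert (q15 : q < 1.5) by nra.
    assert (hs : s < 1 - q/2).
    { destruct (Rlt_or_le s (1 - q/2)) as [h'|h']; [exact h'|]. nra. }
    (* 2 a s <= a^2 + s^2 = 2y ; 2 b s <= y + x *)
    assert (A1 : 2 * a * s <= 2 * y) by nra.
    assert (A2 : 2 * b * s <= y + x) by nra.
    assert (B1 : 2 * a * x <= 2 * y * s) by (rewrite <- Hs; nra).
    assert (B2 : 2 * b * x <= (y + x) * s) by (rewrite <- Hs; nra).
    assert (C : -1 + 3 * s - s * s < 0) by nra.
    assert (D : y * (-1 + 3*s - s*s) <= x * (-1 + 3*s - s*s)) by nra.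
    assert (E : 0 <= 2*s*s - 4*s + 1) by nra.
    assert (0 < -y + 2*y*s - x*x + (y+x)*s - y*x) by nra.
    rewrite <- Hs in H, D. nra.
  - destruct (Rlt_or_le y 7) as [h|h]; [exact h|exfalso].
    assert (A1 : 6 * a <= 2*y - x + 9) by (assert (0 <= (a-3)^2) by apply pow2_ge_0; nra).
    assert (A2 : 6 * b <= y + 9) by (assert (0 <= (b-3)^2) by apply pow2_ge_0; nra).
    assert (B1 : 6 * a * x <= (2*y - x + 9) * x) by (apply Rmult_le_compat_r; lra).
    assert (B2 : 6 * b * x <= (y + 9) * x) by (apply Rmult_le_compat_r; lra).
    assert (0 <= (x - 9/4)^2) by apply pow2_ge_0.
    nra.
Qed.

Definition pw3 (v0 v1 v2 v3 t : R) : R :=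
  if Rle_dec t (1/4) then v0 + 4*(v1-v0)*t
  else if Rle_dec t (5/8) then v1 + 8/3*(v2-v1)*(t-1/4)
  else v2 + 8/3*(v3-v2)*(t-5/8).

Definition part (i : nat) : R :=
  match i with 0%nat => 0 | 1%nat => 1/4 | 2%nat => 5/8 | _ => 1 end.

Lemma pw3_0 v0 v1 v2 v3 : pw3 v0 v1 v2 v3 0 = v0.
Proof. unfold pw3. destruct (Rle_dec 0 (1/4)); [ring|lra]. Qed.

Lemma pw3_1 v0 v1 v2 v3 : pw3 v0 v1 v2 v3 1 = v3.
Proof. unfold pw3. destruct (Rle_dec 1 (1/4)); [lra|]. destruct (Rle_dec 1 (5/8)); [lra|]. field. Qed.

Lemma pw3_cases t : 0 <= t <= 1 -> exists tau, 0 <= tau <= 1 /\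
  ((forall v0 v1 v2 v3, pw3 v0 v1 v2 v3 t = (1-tau)*v0 + tau*v1) \/
   (forall v0 v1 v2 v3, pw3 v0 v1 v2 v3 t = (1-tau)*v1 + tau*v2) \/
   (forall v0 v1 v2 v3, pw3 v0 v1 v2 v3 t = (1-tau)*v2 + tau*v3)).
Proof.
  intros ht. unfold pw3. destruct (Rle_dec t (1/4)).
  - exists (4*t). split; [lra|]. left. intros. ring.
  - destruct (Rle_dec t (5/8)).
    + exists (8/3*(t-1/4)). split; [lra|]. right; left. intros. ring.
    + exists (8/3*(t-5/8)). split; [lra|]. right; right. intros. ring.
Qed.

Lemma pw3_lin v0 v1 v2 v3 i : (i < 3)%nat ->
  exists a b, a = (match i with 0%nat => 4*(v1-v0) | 1%nat => 8/3*(v2-v1) | _ => 8/3*(v3-v2) end)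
   /\ forall t, part i <= t <= part (S i) -> pw3 v0 v1 v2 v3 t = a * t + b.
Proof.
  intros hi. destruct i as [|[|[|i]]]; try lia; simpl.
  - exists (4*(v1-v0)), v0. split; [reflexivity|]. intros t ht. unfold pw3.
    destruct (Rle_dec t (1/4)); [ring|lra].
  - exists (8/3*(v2-v1)), (v1 - 8/3*(v2-v1)/4). split; [reflexivity|]. intros t ht. unfold pw3.
    destruct (Rle_dec t (1/4)).
    + assert (t = 1/4) by lra. subst t. field.
    + destruct (Rle_dec t (5/8)); [field|lra].
  - exists (8/3*(v3-v2)), (v2 - 8/3*(v3-v2)*(5/8)). split; [reflexivity|]. intros t ht. unfold pw3.
    destruct (Rle_dec t (1/4)); [lra|].
    destruct (Rle_dec t (5/8)).
    + assert (t = 5/8) by lra. subst t. field.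
    + field.
Qed.

Theorem lemma5p5 (l m : R) (hl : 0 < l) (hlm : l <= m) (hk : 0 < kappa l m) :
  exists (gX gY : R -> R) (k0 : R),
    0 < k0 /\
    (* (i) *)
    (gX 0 = 1 / 2 /\ gY 0 = 1 / 2 /\ gX 1 = l /\ gY 1 = m) /\
    (* (ii) *)
    (forall t : R, 0 <= t <= 1 -> k0 <= kappa (gX t) (gY t)) /\
    (* (iii) *)
    (exists (n : nat) (p : nat -> R), pl_path_slope_bound gX gY p n 20) /\
    (* (iv) *)
    (forall t : R, 0 <= t <= 1 ->
       3 / 2 - sqrt 2 <= gX t <= 10 /\ 3 / 2 - sqrt 2 <= gY t <= 10).
Proof.
  rewrite kappa_K in hk by lra.
  set (r := m / l).
  assert (hr : 1 <= r) by (unfold r; apply Rmult_le_reg_r with l; [lra|]; field_simplify; lra).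
  set (s := sqrt l).
  assert (hs : 0 < s) by (apply sqrt_lt_R0; lra).
  assert (hss : s * s = l) by (apply sqrt_sqrt; lra).
  assert (hm : m = r * (s * s)) by (rewrite hss; unfold r; field; lra).
  set (A := sqrt (2*r-1) + sqrt r).
  assert (hA : 0 < A).
  { unfold A. assert (0 < sqrt r) by (apply sqrt_lt_R0; lra). pose proof (sqrt_pos (2*r-1)). lra. }
  set (s0 := A / (1 + r)).
  assert (hs0A : s0 * (1 + r) = A) by (unfold s0; field; lra).
  set (l0 := s0 * s0). set (m0 := r * l0).
  assert (EK : K l m = - r + 2 * s * A - (1 + r) * (s * s)).
  { rewrite hm, <- hss. rewrite K_ray by lra. rewrite hss. reflexivity. }
  assert (hs0p : 0 < s0) by (unfold s0; apply Rdiv_lt_0_compat; lra).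
  assert (EK0 : K l0 m0 = - r + 2 * s0 * A - (1 + r) * (s0 * s0)).
  { unfold m0, l0. rewrite K_ray by lra. reflexivity. }
  assert (K0ge : K l m <= K l0 m0).
  { rewrite EK, EK0. rewrite <- hs0A. assert (0 <= (1+r) * (s - s0)^2) by (apply Rmult_le_pos; [lra|apply pow2_ge_0]). nra. }
  assert (hAsq : r * (1 + r) < A * A).
  { rewrite EK in hk. rewrite <- hs0A in hk |- *.
    assert (0 <= (1+r) * (s - s0)^2) by (apply Rmult_le_pos; [lra|apply pow2_ge_0]). nra. }
  assert (s0lo : 1/2 <= s0).
  { rewrite <- hs0A in hAsq. nra. }
  assert (s0hi : s0 <= 3/2).
  { assert (a1 : sqrt (2*r-1) <= r).
    { pose proof (sqrt_pos (2*r-1)). pose proof (sqrt_sqrt (2*r-1) ltac:(lra)). nra. }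
    assert (a2 : sqrt r <= (1 + r)/2).
    { pose proof (sqrt_pos r). pose proof (sqrt_sqrt r ltac:(lra)). nra. }
    assert (A <= 3/2 * (1 + r)) by (unfold A; lra).
    nra. }
  assert (hl0 : 1/4 <= l0 <= 9/4) by (unfold l0; nra).
  assert (hl0m0 : l0 <= m0) by (unfold m0; nra).
  assert (EKd : K l0 l0 = -1 + 4 * s0 - 2 * (s0 * s0)).
  { replace l0 with (1 * (s0 * s0)) at 2 by (unfold l0; ring). unfold l0. rewrite K_ray by lra.
    replace (2*1-1) with 1 by ring. rewrite sqrt_1. ring. }
  assert (Kd : 1/2 <= K l0 l0) by (rewrite EKd; nra).
  assert (Kh : 1/2 <= K (1/2) (1/2)).
  { unfold K. replace (2 * (1/2) - 1/2) with (1/2) by field.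
    pose proof (sqrt_pos (1/2)). pose proof (sqrt_sqrt (1/2) ltac:(lra)).
    assert (5/8 <= sqrt (1/2)) by nra. lra. }
  set (k0 := Rmin (K l m) (1/2)).
  assert (hk0 : 0 < k0) by (unfold k0; apply Rmin_glb_lt; lra).
  assert (k0a : k0 <= K l m) by apply Rmin_l.
  assert (k0b : k0 <= 1/2) by apply Rmin_r.
  assert (B0 := K_bounds l0 m0 ltac:(lra) hl0m0 ltac:(lra)).
  assert (B1 := K_bounds l m hl hlm hk).
  set (gX := pw3 (1/2) l0 l0 l). set (gY := pw3 (1/2) l0 m0 m).
  assert (key : forall t, 0 <= t <= 1 -> 0 < gX t /\ gX t <= gY t /\ k0 <= K (gX t) (gY t)).
  { intros t ht. destruct (pw3_cases t ht) as [tau [htau [C|[C|C]]]]; unfold gX, gY; rewrite !C.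
    - split; [nra|]. split; [nra|].
      eapply Rle_trans; [|apply K_seg; lra]. nra.
    - split; [nra|]. split; [nra|].
      eapply Rle_trans; [|apply K_seg; lra]. nra.
    - split; [nra|]. split; [nra|].
      eapply Rle_trans; [|apply K_seg; try lra].
      + nra.
      + right. unfold m0. rewrite hm, hss. unfold r. field. lra. }
  exists gX, gY, k0. split; [exact hk0|].
  split.
  { unfold gX, gY. rewrite !pw3_0, !pw3_1. lra. }
  split.
  { intros t ht. destruct (key t ht) as [h1 [h2 h3]]. rewrite kappa_K by lra. exact h3. }
  split.
  { exists 3%nat, part. split.
    - split; [reflexivity|]. split; [reflexivity|].
      intros i hi. destruct i as [|[|[|i]]]; try lia; simpl; lra.
    - intros i hi.
      destruct (pw3_lin (1/2) l0 l0 l i hi) as [aX [bX [eX HX]]].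
      destruct (pw3_lin (1/2) l0 m0 m i hi) as [aY [bY [eY HY]]].
      exists aX, bX, aY, bY.
      split; [|split; [|intros t ht; split; [apply HX; exact ht| apply HY; exact ht]]];
      apply Rabs_le; destruct i as [|[|[|i]]]; try lia; try rewrite eX; try rewrite eY; lra. }
  intros t ht. destruct (key t ht) as [h1 [h2 h3]].
  destruct (K_bounds (gX t) (gY t) h1 h2 ltac:(lra)). lra.
Qed.
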